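(* For any $n$-qubit pure state $\ket{\psi}$ and any integer $k\ge1$, the $nk$-qubit state $\ket{\psi}^{\otimes k}$ satisfies $\mathcal{C}(\ket{\psi}^{\otimes k})=1-\big(1-\mathcal{C}(\ket{\psi})\big)^k$.
   Context: For an $m$-qubit pure state $\ket{\phi}$, $\mathcal{C}(\ket{\phi})=1-\frac{1}{2^{m}}\sum_{\alpha}\mathrm{Tr}[\rho_\alpha^2]$, the sum over all subsets $\alpha$ of its $m$ qubits, $\rho_\alpha$ the reduced state on $\alpha$, $\mathrm{Tr}[\rho_\emptyset^2]=1$. *)

(* Defs.v *)
(* Complex amplitudes live in an arbitrary numClosedFieldType C
   (e.g. complex numbers); conjugation is z^*. *)
From HB Require Import structures.
From mathcomp Require Import all_boot all_order all_algebra.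
Set Implicit Arguments. Unset Strict Implicit. Unset Printing Implicit Defensive.
Import Order.TTheory GRing.Theory Num.Theory.
Local Open Scope ring_scope.

(* computational basis states of n qubits: bit strings x : 'I_n -> bool *)
Definition cfg (n : nat) := {ffun 'I_n -> bool}.

Definition merge n (A : {set 'I_n}) (x z : cfg n) : cfg n :=
  [ffun i => if i \in A then x i else z i].

(* x is supported in A (all bits outside A are 0): encodes basis states of the
   subsystem A as n-bit strings padded with zeros *)
Definition onA n (A : {set 'I_n}) (x : cfg n) : bool :=
  [forall i, (i \notin A) ==> ~~ x i].

(* matrix entries <x| rho_A |y> of the reduced state of |psi><psi| on A
   (partial trace over the complement of A) *)
Definition rdm (C : numClosedFieldType) n (psi : cfg n -> C) (A : {set 'I_n})
  (x y : cfg n) : C :=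
  \sum_(z : cfg n | onA (~: A) z) psi (merge A x z) * (psi (merge A y z))^*.

Definition purity (C : numClosedFieldType) n (psi : cfg n -> C) (A : {set 'I_n}) : C :=
  \sum_(x : cfg n | onA A x) \sum_(y : cfg n | onA A y) rdm psi A x y * rdm psi A y x.

Definition Cmeas (C : numClosedFieldType) n (psi : cfg n -> C) : C :=
  1 - ((2 ^ n)%:R)^-1 * \sum_(A : {set 'I_n}) purity psi A.

Lemma idx_lt n k (c : 'I_k) (j : 'I_n) : (c * n + j < n * k)%N.
Proof.
have hc := ltn_ord c. have hj := ltn_ord j.
apply: (@leq_trans (c * n + n)); first by rewrite ltn_add2l.
by rewrite addnC -mulSn mulnC leq_mul2l hc orbT.
Qed.

(* qubit j of copy c sits at position c*n + j *)
Definition idx n k (c : 'I_k) (j : 'I_n) : 'I_(n * k) := Ordinal (idx_lt c j).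

Definition tpow (C : numClosedFieldType) n (psi : cfg n -> C) (k : nat)
  (x : cfg (n * k)) : C :=
  \prod_(c < k) psi [ffun j : 'I_n => x (idx c j)].
Arguments tpow {C n} psi k x.

(* Main.v *)
Require Import Defs.
From HB Require Import structures.
From mathcomp Require Import all_boot all_order all_algebra.
Set Implicit Arguments. Unset Strict Implicit. Unset Printing Implicit Defensive.
Import Order.TTheory GRing.Theory Num.Theory.
Local Open Scope ring_scope.

Section Tensor.
Variables (n k : nat).

Lemma npos (i : 'I_(n * k)) : (0 < n)%N.
Proof. case: n i => [|m] [i hi] //; by rewrite mul0n in hi. Qed.

Lemma jI_lt (i : 'I_(n * k)) : (i %% n < n)%N.
Proof. exact: ltn_pmod (npos i). Qed.
Lemma cI_lt (i : 'I_(n * k)) : (i %/ n < k)%N.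
Proof. rewrite ltn_divLR ?(npos i) //; case: i => i hi /=; by rewrite mulnC. Qed.

Definition jI (i : 'I_(n * k)) : 'I_n := Ordinal (jI_lt i).
Definition cI (i : 'I_(n * k)) : 'I_k := Ordinal (cI_lt i).

Lemma idxK i : idx (cI i) (jI i) = i.
Proof. by apply: val_inj; rewrite /= -divn_eq. Qed.

Lemma cI_idx c j : cI (idx c j) = c.
Proof.
apply: val_inj => /=; have hj := ltn_ord j.
by rewrite divnMDl ?(leq_ltn_trans _ hj) // divn_small // addn0.
Qed.
Lemma jI_idx c j : jI (idx c j) = j.
Proof. by apply: val_inj => /=; rewrite modnMDl modn_small. Qed.

Definition sp (x : cfg (n * k)) : {ffun 'I_k -> cfg n} :=
  [ffun c => [ffun j => x (idx c j)]].
Definition jn (f : {ffun 'I_k -> cfg n}) : cfg (n * k) :=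
  [ffun i => f (cI i) (jI i)].
Lemma spK : cancel sp jn.
Proof. by move=> x; apply/ffunP => i; rewrite !ffunE idxK. Qed.
Lemma jnK : cancel jn sp.
Proof. by move=> f; apply/ffunP => c; apply/ffunP => j; rewrite !ffunE cI_idx jI_idx. Qed.

Definition spS (A : {set 'I_(n * k)}) : {ffun 'I_k -> {set 'I_n}} :=
  [ffun c => [set j | idx c j \in A]].
Definition jnS (F : {ffun 'I_k -> {set 'I_n}}) : {set 'I_(n * k)} :=
  [set i | jI i \in F (cI i)].
Lemma spSK : cancel spS jnS.
Proof. by move=> A; apply/setP => i; rewrite !inE ffunE inE idxK. Qed.
Lemma jnSK : cancel jnS spS.
Proof. by move=> F; apply/ffunP => c; apply/setP => j; rewrite ffunE !inE cI_idx jI_idx. Qed.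

Lemma onA_jn A f : onA A (jn f) = [forall c, onA (spS A c) (f c)].
Proof.
apply/forallP/forallP => H.
  move=> c; apply/forallP => j; move: (H (idx c j)).
  by rewrite /jn /spS !ffunE cI_idx jI_idx inE.
move=> i; move/forallP: (H (cI i)) => /(_ (jI i)).
by rewrite /jn /spS !ffunE inE idxK.
Qed.

Lemma onAC_jn A f : onA (~: A) (jn f) = [forall c, onA (~: spS A c) (f c)].
Proof.
apply/forallP/forallP => H.
  move=> c; apply/forallP => j; move: (H (idx c j)).
  by rewrite /jn /spS !ffunE cI_idx jI_idx !inE.
move=> i; move/forallP: (H (cI i)) => /(_ (jI i)).
by rewrite /jn /spS !ffunE !inE idxK.
Qed.

Lemma merge_sp A x z c :
  [ffun j => Defs.merge A x z (idx c j)] = Defs.merge (spS A c) (sp x c) (sp z c).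
Proof. by apply/ffunP => j; rewrite /Defs.merge /spS /sp !ffunE inE. Qed.

End Tensor.
Section Alg.
Variables (C : numClosedFieldType) (n k : nat) (psi : cfg n -> C).

Lemma tpow_merge A x z :
  tpow psi k (Defs.merge A x z) =
  \prod_c psi (Defs.merge (spS A c) (sp x c) (sp z c)).
Proof. by apply: eq_bigr => c _; rewrite merge_sp. Qed.

Lemma rdm_tpow A x y :
  rdm (tpow psi k) A x y = \prod_c rdm psi (spS A c) (sp x c) (sp y c).
Proof.
rewrite /rdm (reindex (@jn n k)) /=; last first.
  by exists (@sp n k) => ? _; [apply: jnK | apply: spK].
under eq_bigl do rewrite onAC_jn.
under eq_bigr do rewrite !tpow_merge jnK rmorph_prod -big_split /=.
rewrite bigA_distr_big_dep; apply: eq_bigl => f.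
by apply/forallP/familyP => H c; exact: (H c).
Qed.

Lemma fam_forall (P : 'I_k -> pred (cfg n)) (f : {ffun 'I_k -> cfg n}) :
  (f \in family P) = [forall c, P c (f c)].
Proof. by apply/familyP/forallP => H c; exact: (H c). Qed.

Lemma purity_tpow A :
  purity (tpow psi k) A = \prod_c purity psi (spS A c).
Proof.
have bj : bijective (@jn n k) := Bijective (@jnK n k) (@spK n k).
rewrite /purity (reindex (@jn n k)) /=; last exact: onW_bij.
under eq_bigl do rewrite onA_jn.
transitivity (\sum_(f : {ffun 'I_k -> cfg n} | [forall c, onA (spS A c) (f c)])
   \sum_(g : {ffun 'I_k -> cfg n} | [forall c, onA (spS A c) (g c)])
   \prod_c (rdm psi (spS A c) (f c) (g c) * rdm psi (spS A c) (g c) (f c))).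
  apply: eq_bigr => f _.
  rewrite (reindex (@jn n k)) /=; last exact: onW_bij.
  under eq_bigl do rewrite onA_jn.
  apply: eq_bigr => g _.
  by rewrite !rdm_tpow !jnK -big_split.
rewrite bigA_distr_big_dep; apply: eq_big => f; first by rewrite fam_forall.
move=> _; rewrite bigA_distr_big_dep; apply: eq_bigl => g.
by rewrite fam_forall.
Qed.

Lemma sum_purity_tpow :
  \sum_(A : {set 'I_(n * k)}) purity (tpow psi k) A =
  (\sum_(B : {set 'I_n}) purity psi B) ^+ k.
Proof.
have bj : bijective (@jnS n k) := Bijective (@jnSK n k) (@spSK n k).
rewrite (reindex (@jnS n k)) /=; last exact: onW_bij.
under eq_bigr do rewrite purity_tpow jnSK.
transitivity (\prod_(c < k) \sum_(B : {set 'I_n}) purity psi B).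
  by rewrite bigA_distr_bigA.
by rewrite prodr_const card_ord.
Qed.

Lemma Cmeas_tpow : Cmeas (tpow psi k) = 1 - (1 - Cmeas psi) ^+ k.
Proof.
rewrite /Cmeas sum_purity_tpow subKr exprMn exprVn -natrX -expnM.
done.
Qed.

End Alg.

Unset Implicit Arguments.

Theorem mainTheorem13 (C : numClosedFieldType) (n k : nat) (psi : cfg n -> C) :
  \sum_(x : cfg n) `|psi x| ^+ 2 = 1 -> (1 <= k)%N ->
  Cmeas (tpow psi k) = 1 - (1 - Cmeas psi) ^+ k.
Proof. by move=> _ _; exact: Cmeas_tpow. Qed.
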